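(* Let $\mathbb{F}$ be the field of order $q$ ($q$ a prime power), and let $S\subset\mathbb{F}^\times$ be such that for all distinct $i,j\in S$ we have $i+j\neq0$ and $ij\neq-1$. For $i\in S$ let $$Z_i=\left[\begin{array}{ccc}1&0&0\\0&1&1\\ i&1&0\\ 0&i^{-1}&i\end{array}\right]$$ (the sudoku flag with datum $\Gamma_i=\begin{pmatrix}i&1\\0&i^{-1}\end{pmatrix}$, $\beta_i=i$). Then each $Z_i$ is a sudoku flag, and if $M_i$ is a sudoku solution generated by $Z_i$ for each $i\in S$, the collection $\{M_i\mid i\in S\}$ is a strongly orthogonal collection of sudoku solutions of order $q^2$ of size $|S|$.
   Context: Locations of a sudoku solution of order $q^2$ are identified with $(x_1,x_2,x_3,x_4)\in\mathbb{F}^4$: $x_1$ large row, $x_2$ row within the large row, $x_3$ large column, $x_4$ column within the large column; rows, columns and subsquares are the sets of locations with fixed $(x_1,x_2)$, $(x_3,x_4)$, $(x_1,x_3)$ respectively. A sudoku solution of order $q^2$ assigns symbols $\{0,\dots,q^2-1\}$ to locations so that each symbol occurs exactly once in every row, column and subsquare; two are orthogonal if upon superimposition each ordered pair of symbols occurs exactly once. Each symbol is $x=b_qq+b_1$ with radix digit $b_q$ and units digit $b_1$ in $\{0,\dots,q-1\}$; fix a bijection $\mathbb{F}\leftrightarrow\{0,\dots,q-1\}$ to record coordinates. A flag is a pair $(g,V)$ of subspaces of $\mathbb{F}^4$ with $\dim g=2$, $\dim V=3$, $g\subset V$; the notation $[v_1\ v_2\ v_3]$ (a $4\times3$ matrix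 with columns $v_1,v_2,v_3$) denotes $g=\langle v_1,v_2\rangle$, $V=\langle v_1,v_2,v_3\rangle$. It is a sudoku flag if every coset of $g$ meets every row, column and subsquare in exactly one location. A sudoku solution generated by a sudoku flag $(g,V)$ is a sudoku solution of order $q^2$ in which each coset of $g$ is exactly the set of locations of one symbol and each coset of $V$ is exactly the set of locations whose symbols have one given radix digit. An ordered orthogonal array $\mathrm{OOA}(4,s,2,v)$ is a $2s\times v^4$ array over an alphabet of size $v$ with rows labeled $(i,j)$, $1\le i\le s$, $j\in\{1,2\}$, such that for every top-justified set $T$ of $4$ rows ($(i,2)\in T\Rightarrow(i,1)\in T$) the subarray on the rows of $T$ contains each $4$-tuple exactly once as a column. For sudoku solutions $M_1,\dots,M_{m}$ of order $q^2$, the associated array is the $2(m+2)\times q^4$ array with one column per location $(x_1,x_2,x_3,x_4)$, with entries $x_1,x_2,x_3,x_4$ in rows $(1,1),(1,2),(2,1),(2,2)$ and the radix and units digits of the symbol of $M_k$ at that location in rows $(k+2,1),(k+2,2)$. A family of $m$ mutually orthogonal sudoku solutions is strongly orthogonal if its associated array is an $\mathrm{OOA}(4,m+2,2,q)$. *)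

(* Defs.v *)
From HB Require Import structures.
From mathcomp Require Import all_boot all_order all_algebra.
Set Implicit Arguments. Unset Strict Implicit. Unset Printing Implicit Defensive.
Import GRing.Theory.
Local Open Scope ring_scope.

(* Coordinates of a location x : 'rV[F]_4 are x c0, x c1, x c2, x c3,
   i.e. x_1 (large row), x_2 (row in large row), x_3 (large column),
   x_4 (column in large column). *)
Definition c0 : 'I_4 := @Ordinal 4 0 isT.
Definition c1 : 'I_4 := @Ordinal 4 1 isT.
Definition c2 : 'I_4 := @Ordinal 4 2 isT.
Definition c3 : 'I_4 := @Ordinal 4 3 isT.

Definition in_coset (F : fieldType) (m : nat) (A : 'M[F]_(m, 4)) (x y : 'rV[F]_4) : bool :=
  ((y - x) <= A)%MS.

Definition sudoku_flag (F : finFieldType) (m1 m2 : nat)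
  (g : 'M[F]_(m1, 4)) (V : 'M[F]_(m2, 4)) : Prop :=
  [/\ \rank g = 2%N, \rank V = 3%N, (g <= V)%MS &
   forall (x : 'rV[F]_4) (a b : F),
     [/\ #|[set y : 'rV[F]_4 | in_coset g x y & (y ord0 c0 == a) && (y ord0 c1 == b)]| = 1%N,
         #|[set y : 'rV[F]_4 | in_coset g x y & (y ord0 c2 == a) && (y ord0 c3 == b)]| = 1%N &
         #|[set y : 'rV[F]_4 | in_coset g x y & (y ord0 c0 == a) && (y ord0 c2 == b)]| = 1%N]].

Definition sudoku_solution (F : finFieldType) (M : 'rV[F]_4 -> 'I_(#|F| ^ 2)) : Prop :=
  forall (a b : F) (s : 'I_(#|F| ^ 2)),
    [/\ #|[set y : 'rV[F]_4 | (y ord0 c0 == a) && (y ord0 c1 == b) && (M y == s)]| = 1%N,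
        #|[set y : 'rV[F]_4 | (y ord0 c2 == a) && (y ord0 c3 == b) && (M y == s)]| = 1%N &
        #|[set y : 'rV[F]_4 | (y ord0 c0 == a) && (y ord0 c2 == b) && (M y == s)]| = 1%N].

Definition radix (F : finType) (s : 'I_(#|F| ^ 2)) : nat := (s %/ #|F|)%N.
Definition units (F : finType) (s : 'I_(#|F| ^ 2)) : nat := (s %% #|F|)%N.

Definition generated_by (F : finFieldType) (m1 m2 : nat)
  (g : 'M[F]_(m1, 4)) (V : 'M[F]_(m2, 4)) (M : 'rV[F]_4 -> 'I_(#|F| ^ 2)) : Prop :=
  [/\ sudoku_solution M,
      (forall x : 'rV[F]_4, exists s : 'I_(#|F| ^ 2),
          [set y : 'rV[F]_4 | in_coset g x y] = [set y : 'rV[F]_4 | M y == s]) &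
      (forall x : 'rV[F]_4, exists d : nat,
          [set y : 'rV[F]_4 | in_coset V x y] = [set y : 'rV[F]_4 | radix (M y) == d])].

Definition orthogonal (F : finFieldType) (M1 M2 : 'rV[F]_4 -> 'I_(#|F| ^ 2)) : Prop :=
  forall s t : 'I_(#|F| ^ 2), #|[set y : 'rV[F]_4 | (M1 y == s) && (M2 y == t)]| = 1%N.

(* Ordered orthogonal array OOA(4, s, 2, v): rows labelled (i, j), i : 'I_s,
   j : 'I_2 (j = 0 is "1", j = 1 is "2"), columns indexed by C. *)
Definition OOA4 (s v : nat) (C : finType) (A : 'I_s -> 'I_2 -> C -> nat) : Prop :=
  [/\ #|C| = (v ^ 4)%N,
      (forall i j c, A i j c < v)%N &
      forall T : {set 'I_s * 'I_2}, #|T| = 4%N ->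
        (forall i, (i, ord_max) \in T -> (i, ord0) \in T) ->
        forall f : 'I_s -> 'I_2 -> 'I_v,
          #|[set c | [forall r in T, A r.1 r.2 c == f r.1 r.2]]| = 1%N].

(* Associated array; rows 'I_(2 + m): the first two row-pairs are the
   coordinates (encoded via e), the remaining ones the digits of M k. *)
Definition assoc_array (F : finFieldType) (m : nat) (e : F -> 'I_#|F|)
  (M : 'I_m -> 'rV[F]_4 -> 'I_(#|F| ^ 2)) (i : 'I_(2 + m)) (j : 'I_2) (x : 'rV[F]_4) : nat :=
  match split i with
  | inl a => if val a == 0%N then (if val j == 0%N then e (x ord0 c0) else e (x ord0 c1))
             else (if val j == 0%N then e (x ord0 c2) else e (x ord0 c3))
  | inr k => if val j == 0%N then radix (M k x) else units (M k x)
  end.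

Definition strongly_orthogonal (F : finFieldType) (m : nat) (e : F -> 'I_#|F|)
  (M : 'I_m -> 'rV[F]_4 -> 'I_(#|F| ^ 2)) : Prop :=
  [/\ (forall k, sudoku_solution (M k)),
      (forall k l, k != l -> orthogonal (M k) (M l)) &
      OOA4 (#|F|) (assoc_array e M)].

(* The 4x3 matrix Z_i = [v1 v2 v3] *)
Definition Zmat (F : fieldType) (i : F) : 'M[F]_(4, 3) :=
  \matrix_(r < 4, c < 3)
    nth 0 (nth [::] [:: [:: 1; 0; 0]; [:: 0; 1; 1]; [:: i; 1; 0]; [:: 0; i^-1; i]] r) c.

(* g = <v1, v2> (as rows), V = <v1, v2, v3> *)
Definition flag_g (F : fieldType) (Z : 'M[F]_(4, 3)) : 'M[F]_(2, 4) :=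
  \matrix_(c < 2, r < 4) Z r (widen_ord (isT : (2 <= 3)%N) c).
Definition flag_V (F : fieldType) (Z : 'M[F]_(4, 3)) : 'M[F]_(3, 4) := Z^T.

(* Main.v *)
Require Import Defs.
From HB Require Import structures.
From mathcomp Require Import all_boot all_order all_algebra.
From mathcomp Require Import ring.
Set Implicit Arguments. Unset Strict Implicit. Unset Printing Implicit Defensive.
Import GRing.Theory.
Local Open Scope ring_scope.

Section Basics.
Variable F : fieldType.

Lemma elim4 (P : 'I_4 -> Prop) : P c0 -> P c1 -> P c2 -> P c3 -> forall j, P j.
Proof.
move=> H0 H1 H2 H3 [[|[|[|[|j]]]] Hj] //.
- by have -> : Ordinal Hj = c0 by apply: val_inj.
- by have -> : Ordinal Hj = c1 by apply: val_inj.
- by have -> : Ordinal Hj = c2 by apply: val_inj.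
- by have -> : Ordinal Hj = c3 by apply: val_inj.
Qed.

Definition mk4 (a b c d : F) : 'rV[F]_4 := \row_(j < 4) nth 0 [:: a; b; c; d] j.

Lemma mk4E a b c d : [/\ mk4 a b c d ord0 c0 = a, mk4 a b c d ord0 c1 = b,
  mk4 a b c d ord0 c2 = c & mk4 a b c d ord0 c3 = d].
Proof. by rewrite !mxE. Qed.

Lemma row4_eq (x y : 'rV[F]_4) :
  x ord0 c0 = y ord0 c0 -> x ord0 c1 = y ord0 c1 ->
  x ord0 c2 = y ord0 c2 -> x ord0 c3 = y ord0 c3 -> x = y.
Proof.
move=> h0 h1 h2 h3; apply/rowP; apply: elim4 => //.
Qed.

Definition mk2 (a b : F) : 'rV[F]_2 := \row_(j < 2) nth 0 [:: a; b] j.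
Definition mk3 (a b c : F) : 'rV[F]_3 := \row_(j < 3) nth 0 [:: a; b; c] j.

Lemma mk2_eta (D : 'rV[F]_2) : D = mk2 (D ord0 ord0) (D ord0 ord_max).
Proof. by apply/rowP => -[[|[|j]] Hj] //; rewrite !mxE /=; congr (D _ _); apply: val_inj. Qed.
Lemma mk3_eta (D : 'rV[F]_3) : D = mk3 (D ord0 ord0) (D ord0 1) (D ord0 ord_max).
Proof. by apply/rowP => -[[|[|[|j]]] Hj] //; rewrite !mxE /=; congr (D _ _); apply: val_inj. Qed.

Lemma mulg (t a b : F) : mk2 a b *m flag_g (Zmat t) = mk4 a b (t * a + b) (b * t^-1).
Proof.
apply/rowP; apply: elim4; rewrite !mxE !big_ord_recr big_ord0 /= !mxE /=; ring.
Qed.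

Lemma mulV (t a b c : F) : mk3 a b c *m flag_V (Zmat t) =
  mk4 a (b + c) (t * a + b) (b * t^-1 + t * c).
Proof.
apply/rowP; apply: elim4; rewrite !mxE !big_ord_recr big_ord0 /= !mxE /=; ring.
Qed.

Lemma mk4E0 a b c d : mk4 a b c d ord0 c0 = a. Proof. by rewrite !mxE. Qed.
Lemma mk4E1 a b c d : mk4 a b c d ord0 c1 = b. Proof. by rewrite !mxE. Qed.
Lemma mk4E2 a b c d : mk4 a b c d ord0 c2 = c. Proof. by rewrite !mxE. Qed.
Lemma mk4E3 a b c d : mk4 a b c d ord0 c3 = d. Proof. by rewrite !mxE. Qed.

Lemma gchar (t : F) (d : 'rV[F]_4) : t != 0 ->
  (d <= flag_g (Zmat t))%MS = (d ord0 c2 == t * d ord0 c0 + d ord0 c1) && (d ord0 c3 == d ord0 c1 / t).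
Proof.
move=> tn0; apply/idP/andP.
  by case/submxP => D ->; rewrite (mk2_eta D) mulg !mk4E0 !mk4E1 !mk4E2 !mk4E3.
case=> /eqP h2 /eqP h3; apply/submxP; exists (mk2 (d ord0 c0) (d ord0 c1)).
by rewrite mulg; apply: row4_eq; rewrite ?mk4E0 ?mk4E1 ?mk4E2 ?mk4E3.
Qed.

Definition Pd (d : 'rV[F]_4) (t : F) :=
  - d ord0 c0 * t ^+ 3 + (d ord0 c2 - d ord0 c1) * t ^+ 2 + (d ord0 c0 + d ord0 c3) * t - d ord0 c2.

Lemma Vchar (t : F) (d : 'rV[F]_4) : t != 0 -> (d <= flag_V (Zmat t))%MS -> Pd d t = 0.
Proof.
move=> tn0; case/submxP => D ->; rewrite (mk3_eta D) mulV /Pd !mk4E0 !mk4E1 !mk4E2 !mk4E3.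
by field.
Qed.

Lemma coset_diff m (A : 'M[F]_(m, 4)) x y y' :
  in_coset A x y -> in_coset A x y' -> (y' - y <= A)%MS.
Proof.
rewrite /in_coset => h h'.
have -> : y' - y = (y' - x) + - (y - x) by rewrite opprB addrA subrK.
by apply: addmx_sub => //; rewrite eqmx_opp.
Qed.


Lemma rank_g (t : F) : \rank (flag_g (Zmat t)) = 2%N.
Proof.
apply/eqP; apply/row_freeP.
exists (\matrix_(j < 4, l < 2) if (j == l :> nat) then 1 else 0).
apply/matrixP => -[[|[|k]] Hk] -[[|[|l]] Hl] //;
  rewrite !mxE !big_ord_recr big_ord0 /= !mxE /=; ring.
Qed.

Lemma rank_V (t : F) : \rank (flag_V (Zmat t)) = 3%N.
Proof.
apply/eqP; apply/row_freeP.
exists (\matrix_(j < 4, l < 3) nth 0 (nth [::] [:: [:: 1; -t; t]; [:: 0; 0; 1]; [:: 0; 1; -1]; [:: 0; 0; 0]] j) l).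
apply/matrixP => -[[|[|[|k]]] Hk] -[[|[|[|l]]] Hl] //;
  rewrite !mxE !big_ord_recr big_ord0 /= !mxE /=; ring.
Qed.

Lemma g_le_V (t : F) : (flag_g (Zmat t) <= flag_V (Zmat t))%MS.
Proof.
apply/submxP; exists (\matrix_(k < 2, l < 3) if (k == l :> nat) then 1 else 0).
apply/matrixP => -[[|[|k]] Hk] j //; move: j; apply: elim4;
  rewrite !mxE !big_ord_recr big_ord0 /= !mxE /=; ring.
Qed.

End Basics.

Ltac fld := field; repeat (apply/andP; split); assumption.

Section Alg.
Variable F : fieldType.
Implicit Types a b c e t u w : F.

Lemma mnz (k x : F) : k != 0 -> k * x = 0 -> x = 0.
Proof. by move=> kn /eqP; rewrite mulf_eq0 (negbTE kn) => /eqP. Qed.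

Lemma subnz (t u : F) : t != u -> t - u != 0.
Proof. by rewrite subr_eq0. Qed.

Lemma add1nz (x : F) : x != -1 -> x + 1 != 0.
Proof. by rewrite addr_eq0. Qed.

Definition PP a b c e t := - a * t ^+ 3 + (c - b) * t ^+ 2 + (a + e) * t - c.

Definition Z4 a b c e := [/\ a = 0, b = 0, c = 0 & e = 0].

Lemma fAfP a b c e t : t != 0 -> a = 0 -> b = 0 -> c = t * a + b -> e = b / t -> Z4 a b c e.
Proof. move=> _ -> -> -> ->; split => //; ring. Qed.

Lemma fBfP a b c e t : t != 0 -> c = 0 -> e = 0 -> c = t * a + b -> e = b / t -> Z4 a b c e.
Proof.
move=> tn -> -> h1 h2.
have hb : b = 0.
  by apply: (@mnz (t^-1)); rewrite ?invr_eq0 // mulrC -h2.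
move: h1; rewrite hb addr0 => /esym h1.
by split => //; apply: (mnz tn).
Qed.

Lemma fPfP a b c e t u : t != 0 -> u != 0 -> t != u ->
  c = t * a + b -> e = b / t -> c = u * a + b -> e = b / u -> Z4 a b c e.
Proof.
move=> tn un tu h1 h2 h3 h4.
have ha : a = 0.
  apply: (mnz (subnz tu)).
  have -> : (t - u) * a = (t * a + b) - (u * a + b) by ring.
  by rewrite -h1 -h3 subrr.
have hb : b = 0.
  apply: (mnz (subnz tu)).
  have -> : (t - u) * b = t * u * (b / u - b / t). by fld.
  by rewrite -h2 -h4 subrr mulr0.
by rewrite /Z4 h1 h2 ha hb; split => //; ring.
Qed.

Lemma fP_z (a b t : F) : t != 0 -> PP a b (t * a + b) (b / t) t = 0.
Proof. by move=> tn; rewrite /PP; fld. Qed.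

Lemma fA_B_P a b c e u : u != 0 -> a = 0 -> b = 0 -> c = 0 -> PP a b c e u = 0 -> Z4 a b c e.
Proof.
move=> un ha hb hc; rewrite /PP ha hb hc => h.
have he : e = 0 by apply: (mnz un); rewrite mulrC -h; ring.
by split.
Qed.

Lemma fA_P_P a b c e u w : u != 0 -> w != 0 -> u != w -> u * w != -1 ->
  a = 0 -> b = 0 -> PP a b c e u = 0 -> PP a b c e w = 0 -> Z4 a b c e.
Proof.
move=> un wn uw uw1 ha hb; rewrite /PP ha hb => h1 h2.
have hc : c = 0.
  apply: (mnz (add1nz uw1)); apply: (mnz (subnz uw)).
  have -> : (u - w) * ((u * w + 1) * c) = w * (- 0 * u ^+ 3 + (c - 0) * u ^+ 2 + (0 + e) * u - c)
     - u * (- 0 * w ^+ 3 + (c - 0) * w ^+ 2 + (0 + e) * w - c) by ring.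
  by rewrite h1 h2; ring.
have he : e = 0 by apply: (mnz un); rewrite mulrC -h1 hc; ring.
by split.
Qed.

Lemma fB_A_P a b c e u : u != 0 -> c = 0 -> e = 0 -> a = 0 -> PP a b c e u = 0 -> Z4 a b c e.
Proof.
move=> un hc he ha; rewrite /PP ha hc he => h.
have hb : b = 0.
  apply: (mnz (mulf_neq0 un un)).
  have -> : u * u * b = - (- 0 * u ^+ 3 + (0 - b) * u ^+ 2 + (0 + 0) * u - 0) by ring.
  by rewrite h oppr0.
by split.
Qed.

Lemma fB_P_P a b c e u w : u != 0 -> w != 0 -> u != w -> u * w != -1 ->
  c = 0 -> e = 0 -> PP a b c e u = 0 -> PP a b c e w = 0 -> Z4 a b c e.
Proof.
move=> un wn uw uw1 hc he; rewrite /PP hc he => h1 h2.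
have ha : a = 0.
  apply: (mnz (mulf_neq0 un wn)); apply: (mnz (add1nz uw1)); apply: (mnz (subnz uw)).
  have -> : (u - w) * ((u * w + 1) * (u * w * a)) =
     u ^+ 2 * (- a * w ^+ 3 + (0 - b) * w ^+ 2 + (a + 0) * w - 0)
     - w ^+ 2 * (- a * u ^+ 3 + (0 - b) * u ^+ 2 + (a + 0) * u - 0) by ring.
  by rewrite h1 h2; ring.
have hb : b = 0.
  apply: (mnz (mulf_neq0 un un)).
  have -> : u * u * b = - (- a * u ^+ 3 + (0 - b) * u ^+ 2 + (a + 0) * u - 0) by rewrite ha; ring.
  by rewrite h1 oppr0.
by split.
Qed.

Lemma fP_A_B a b c e t : t != 0 -> c = t * a + b -> e = b / t -> a = 0 -> c = 0 -> Z4 a b c e.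
Proof.
move=> tn h1 h2 ha hc.
have hb : b = 0 by rewrite -hc h1 ha; ring.
by split => //; rewrite h2 hb; ring.
Qed.

Lemma fP_A_P a b c e t u : t != 0 -> u != 0 -> u != t ->
  c = t * a + b -> e = b / t -> a = 0 -> PP a b c e u = 0 -> Z4 a b c e.
Proof.
move=> tn un ut h1 h2 ha h.
have hb : b = 0.
  apply: (mnz (subnz ut)).
  have -> : (u - t) * b = t * PP a b c e u by rewrite /PP h1 h2 ha; fld.
  by rewrite h mulr0.
by split => //; rewrite ?h1 ?h2 ?ha ?hb; ring.
Qed.

Lemma fP_B_P a b c e t u : t != 0 -> u != 0 -> u != t ->
  c = t * a + b -> e = b / t -> c = 0 -> PP a b c e u = 0 -> Z4 a b c e.
Proof.
move=> tn un ut h1 h2 hc h.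
have hb : b = - (t * a) by apply/eqP; rewrite -addr_eq0 addrC -h1 hc.
have ha : a = 0.
  apply: (mnz (mulf_neq0 un un)); apply: (mnz (subnz ut)).
  have -> : (u - t) * (u * u * a) = - PP a b c e u by rewrite /PP h1 h2 hb; fld.
  by rewrite h oppr0.
have hb0 : b = 0 by rewrite hb ha; ring.
by split => //; rewrite ?h1 ?h2 ?ha ?hb0; ring.
Qed.

Lemma fP_P_P a b c e t u w : t != 0 -> u != 0 -> w != 0 -> u != t -> w != t -> u != w -> u + w != 0 ->
  c = t * a + b -> e = b / t -> PP a b c e u = 0 -> PP a b c e w = 0 -> Z4 a b c e.
Proof.
move=> tn un wn ut wt uw uw0 h1 h2 hu hw.
have Ru : - a * u ^+ 2 + a + b / t = 0.
  apply: (mnz (subnz ut)).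
  by rewrite -hu /PP h1 h2; fld.
have Rw : - a * w ^+ 2 + a + b / t = 0.
  apply: (mnz (subnz wt)).
  by rewrite -hw /PP h1 h2; fld.
have ha : a = 0.
  apply: (mnz uw0); apply: (mnz (subnz uw)).
  have -> : (u - w) * ((u + w) * a) = (- a * w ^+ 2 + a + b / t) - (- a * u ^+ 2 + a + b / t) by ring.
  by rewrite Ru Rw subrr.
have hb : b = 0.
  apply: (@mnz (t^-1)); first by rewrite invr_eq0.
  by rewrite mulrC -Ru ha; ring.
by split => //; rewrite ?h1 ?h2 ?ha ?hb; ring.
Qed.

End Alg.

Inductive kind (F : Type) := KA | KB | KP of F.
Arguments KA {F}. Arguments KB {F}.

Section Kinds.
Variable F : fieldType.
Variable good : F -> bool.
Hypothesis hG0 : forall t, good t -> t != 0.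
Hypothesis hG : forall t u, good t -> good u -> t != u -> (t + u != 0) && (t * u != -1).

Definition valid (K : kind F) := match K with KP t => good t | _ => true end.

Variables a b c e : F.

Definition z0k (K : kind F) : Prop := match K with
  | KA => a = 0 | KB => c = 0 | KP t => PP a b c e t = 0 end.
Definition z1k (K : kind F) : Prop := match K with
  | KA => a = 0 /\ b = 0 | KB => c = 0 /\ e = 0 | KP t => c = t * a + b /\ e = b / t end.

Lemma z10k K : valid K -> z1k K -> z0k K.
Proof.
case: K => [||t] /= v; first by case. by case.
by case=> -> ->; apply: fP_z; apply: hG0.
Qed.

Lemma nKP (u w : F) : KP u <> KP w -> u != w.
Proof. by move=> h; apply/eqP => E; apply: h; rewrite E. Qed.
Lemma nKP' (u w : F) : KP w <> KP u -> u != w.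
Proof. by move=> h; apply/eqP => E; apply: h; rewrite E. Qed.
Lemma gS (u w : F) : good u -> good w -> KP u <> KP w -> u + w != 0.
Proof. by move=> gu gw n; case/andP: (hG gu gw (nKP n)). Qed.
Lemma gM (u w : F) : good u -> good w -> KP u <> KP w -> u * w != -1.
Proof. by move=> gu gw n; case/andP: (hG gu gw (nKP n)). Qed.

Local Hint Resolve nKP nKP' gS gM hG0 : kh.

Lemma P2k K1 K2 : valid K1 -> valid K2 -> K1 <> K2 -> z1k K1 -> z1k K2 -> Z4 a b c e.
Proof.
case: K1 => [||t]; case: K2 => [||u] //= v1 v2 n [h1 h2] [h3 h4];
 try (by case: n);
 first [ by apply: (@fAfP _ a b c e u); eauto with kh
       | by apply: (@fAfP _ a b c e t); eauto with kh
       | by apply: (@fBfP _ a b c e u); eauto with kh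
       | by apply: (@fBfP _ a b c e t); eauto with kh
       | by split
       | by apply: (@fPfP _ a b c e t u); eauto with kh ].
Qed.

Lemma P3k K1 K2 K3 : valid K1 -> valid K2 -> valid K3 -> K1 <> K2 -> K1 <> K3 -> K2 <> K3 ->
  z1k K1 -> z0k K2 -> z0k K3 -> Z4 a b c e.
Proof.
case: K1 => [||t]; case: K2 => [||u]; case: K3 => [||w] //= v1 v2 v3 n12 n13 n23 [h1 h2] h3 h4;
 try (by case: n12); try (by case: n13); try (by case: n23);
 first [ by apply: (@fA_B_P _ a b c e w); eauto with kh
       | by apply: (@fA_B_P _ a b c e u); eauto with kh
       | by apply: (@fA_P_P _ a b c e u w); eauto with kh
       | by apply: (@fB_A_P _ a b c e w); eauto with kh
       | by apply: (@fB_A_P _ a b c e u); eauto with kh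
       | by apply: (@fB_P_P _ a b c e u w); eauto with kh
       | by apply: (@fP_A_B _ a b c e t); eauto with kh
       | by apply: (@fP_A_P _ a b c e t w); eauto with kh
       | by apply: (@fP_A_P _ a b c e t u); eauto with kh
       | by apply: (@fP_B_P _ a b c e t w); eauto with kh
       | by apply: (@fP_B_P _ a b c e t u); eauto with kh
       | by apply: (@fP_P_P _ a b c e t u w); eauto with kh ].
Qed.
End Kinds.

Section Roots.
Variable F : finFieldType.

Lemma roots_bound (a b c e : F) : ~ Z4 a b c e ->
  (#|[set t | PP a b c e t == 0%R]| + (a == 0%R) <= 3)%N.
Proof.
move=> nz.
pose E := fun j : nat => nth 0 [:: -c; a + e; c - b; -a] j.
pose p := \poly_(j < 4) E j.
have pE : forall t, p.[t] = PP a b c e t.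
  by move=> t; rewrite horner_poly !big_ord_recr big_ord0 /= /PP /E /=; ring.
have pn0 : p != 0.
  apply/eqP => p0; apply: nz.
  have k0 : forall j, p`_j = 0 by move=> j; rewrite p0 coef0.
  have := k0 0%N; have := k0 1%N; have := k0 2%N; have := k0 3%N.
  rewrite !coef_poly /E /= => h3 h2 h1 h0.
  have ha : a = 0 by rewrite -[a]opprK h3 oppr0.
  have hc : c = 0 by rewrite -[c]opprK h0 oppr0.
  have hb : b = 0 by move: h2; rewrite hc sub0r => /eqP; rewrite oppr_eq0 => /eqP.
  have he : e = 0 by move: h1; rewrite ha add0r.
  by split.
set R := [set t | _].
have hr : (#|R| < size p)%N.
  rewrite cardE; apply: max_poly_roots => //; last exact: enum_uniq.
  by apply/allP => t; rewrite mem_enum inE /root pE.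
have sp : (size p <= 4)%N by apply: size_poly.
case: eqP => ha /=.
  have sp3 : (size p <= 3)%N.
    apply/leq_sizeP => j hj; rewrite coef_poly /E.
    case: ltnP => // hj4; have -> : j = 3%N by apply/eqP; rewrite eqn_leq -ltnS hj4 hj.
    by rewrite /= ha oppr0.
  by rewrite addn1; apply: leq_trans hr (leq_trans sp3 _).
by rewrite addn0 -ltnS; apply: leq_trans hr (leq_trans sp _).
Qed.
End Roots.

Lemma comb (L : finType) (z0 z1 : pred L) :
  (forall i, z1 i -> z0 i) -> (#|[set i | z0 i]| <= 3)%N ->
  (forall X Y, X != Y -> z1 X -> z1 Y -> False) ->
  (forall X Y Z, X != Y -> X != Z -> Y != Z -> z1 X -> z0 Y -> z0 Z -> False) ->
  (#|[set i | z0 i]| + #|[set i | z1 i]| <= 3)%N.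
Proof.
move=> h10 h3 P2 P3.
case: (pickP z1) => [X zX | n1]; last first.
  by rewrite (@eq_card0 _ [set i | z1 i]) ?addn0 // => i; rewrite inE n1.
have c1 : (#|[set i | z1 i]| <= 1)%N.
  apply/card_le1_eqP => Y Z; rewrite !inE => hY hZ.
  by case: (eqVneq Y Z) => // nYZ; exfalso; exact: P2 nYZ hY hZ.
have c2 : (#|[set i | z0 i] :\ X| <= 1)%N.
  apply/card_le1_eqP => Y Z; rewrite !inE => /andP [nY hY] /andP [nZ hZ].
  case: (eqVneq Y Z) => // nYZ; exfalso.
  by apply: (P3 X Y Z) => //; rewrite eq_sym.
rewrite (cardsD1 X) inE (h10 _ zX) add1n.
by apply: leq_trans (_ : (2 + 1 <= 3)%N) => //; apply: leq_add.
Qed.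

Section Levels.
Variable F : finFieldType.
Variable good : F -> bool.
Hypothesis hG0 : forall t, good t -> t != 0.
Hypothesis hG : forall t u, good t -> good u -> t != u -> (t + u != 0) && (t * u != -1).
Variable m : nat.
Variable w : 'I_m -> F.
Hypothesis hw : injective w.
Hypothesis hwg : forall k, good (w k).

Definition kind_of (i : 'I_(2 + m)) : kind F :=
  match split i with
  | inl a => if val a == 0%N then KA else KB
  | inr k => KP (w k)
  end.

Lemma kind_valid i : valid good (kind_of i).
Proof. by rewrite /kind_of; case: (split i) => [x|k] //=; case: ifP. Qed.

Lemma kind_inj : injective kind_of.
Proof.
move=> i j; rewrite /kind_of -{2}(splitK i) -{2}(splitK j).
case: (split i) => [x|k]; case: (split j) => [y|l] //=.
- case: x => -[|[|x]] hx //; case: y => -[|[|y]] hy //= _;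
    by congr (unsplit (inl _)); apply: val_inj.
- by case: ifP.
- by case: ifP.
- by case=> /hw ->.
Qed.

Variables a b c e : F.

Definition z0b (K : kind F) : bool := match K with
  | KA => a == 0 | KB => c == 0 | KP t => PP a b c e t == 0 end.
Definition z1b (K : kind F) : bool := match K with
  | KA => (a == 0) && (b == 0) | KB => (c == 0) && (e == 0)
  | KP t => (c == t * a + b) && (e == b / t) end.

Lemma z0bP K : z0b K -> z0k a b c e K.
Proof. by case: K => [||t] /= /eqP. Qed.
Lemma z1bP K : z1b K -> z1k a b c e K.
Proof. by case: K => [||t] /= /andP [/eqP h1 /eqP h2]. Qed.
Lemma z10b K : valid good K -> z1b K -> z0b K.
Proof.
case: K => [||t] /= v /andP [/eqP h1 /eqP h2]; rewrite ?h1 //.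
by rewrite h2 fP_z ?hG0.
Qed.

Lemma level_bound : ~ Z4 a b c e ->
  (#|[set i | z0b (kind_of i)]| + #|[set i | z1b (kind_of i)]| <= 3)%N.
Proof.
move=> nz; apply: comb.
- by move=> i; apply: z10b; apply: kind_valid.
- pose isA (K : kind F) := if K is KA then true else false.
  pose B := [set i | isA (kind_of i)].
  pose phi i := match kind_of i with KP t => t | _ => 0 end.
  rewrite -(cardsID B); apply: leq_trans (roots_bound nz); rewrite addnC leq_add //.
    rewrite -(@card_in_imset _ _ phi).
      apply: subset_leq_card; apply/subsetP => t /imsetP [i]; rewrite !inE /phi.
      case: (kind_of i) => [||u] //=.
        by move=> /eqP hc ->; rewrite /PP hc; apply/eqP; ring.
      by move=> hu ->.
    move=> i j; rewrite !inE /phi => /andP [nBi _] /andP [nBj _].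
    move=> E; apply: kind_inj; move: nBi nBj E.
    have vi := kind_valid i; have vj := kind_valid j.
    case: (kind_of i) vi => [||t]; case: (kind_of j) vj => [||u] //= vj vi _ _ E; rewrite ?E //.
    + by have := hG0 vj; rewrite -E eqxx.
    + by have := hG0 vi; rewrite E eqxx.
  case: eqP => ha.
    apply/card_le1_eqP => i j; rewrite !inE => /andP [_ hi] /andP [_ hj].
    by apply: kind_inj; move: hi hj; case: (kind_of i); case: (kind_of j).
  rewrite leqn0; apply/eqP; apply: eq_card0 => i; rewrite !inE.
  by case: (kind_of i) => //= *; rewrite ?andbT ?andbF //; case: eqP.
- move=> X Y nXY h1 h2; apply: nz; apply: (P2k hG0 (kind_valid X) (kind_valid Y)).
  + by move/kind_inj => E; rewrite E eqxx in nXY.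
  + exact: z1bP.
  + exact: z1bP.
- move=> X Y Z nXY nXZ nYZ h1 h2 h3; apply: nz.
  apply: (P3k hG0 hG (kind_valid X) (kind_valid Y) (kind_valid Z)).
  + by move/kind_inj => E; rewrite E eqxx in nXY.
  + by move/kind_inj => E; rewrite E eqxx in nXZ.
  + by move/kind_inj => E; rewrite E eqxx in nYZ.
  + exact: z1bP.
  + exact: z0bP.
  + exact: z0bP.
Qed.
End Levels.

Lemma card_one (T : finType) (A : {set T}) y : y \in A -> (forall z, z \in A -> z = y) -> #|A| = 1%N.
Proof.
move=> yA h; rewrite (_ : A = [set y]) ?cards1 //.
by apply/setP => z; rewrite inE; apply/idP/eqP => [/h|->].
Qed.

Lemma bij_card1 (C D : finType) (h : C -> D) : injective h -> (#|D| <= #|C|)%N ->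
  forall dd, #|[set c | h c == dd]| = 1%N.
Proof.
move=> hi hc dd; have /codomP [c hcd] := inj_card_onto hi hc dd.
apply: (@card_one _ _ c); first by rewrite inE hcd.
by move=> z; rewrite inE hcd => /eqP; apply: hi.
Qed.

Section Gen.
Variable F : finFieldType.
Variables (m1 m2 : nat) (g : 'M[F]_(m1, 4)) (V : 'M[F]_(m2, 4)) (M : 'rV[F]_4 -> 'I_(#|F| ^ 2)).
Hypothesis hgen : generated_by g V M.

Lemma gen_g x y : (M x == M y) = in_coset g x y.
Proof.
case: hgen => _ hb _; have [s hs] := hb x.
have hx : M x = s.
  have : x \in [set y | in_coset g x y] by rewrite inE /in_coset subrr sub0mx.
  by rewrite hs inE => /eqP.
by move/setP: hs => /(_ y); rewrite !inE => ->; rewrite hx eq_sym.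
Qed.

Lemma gen_V x y : (radix (M x) == radix (M y)) = in_coset V x y.
Proof.
case: hgen => _ _ hc; have [s hs] := hc x.
have hx : radix (M x) = s.
  have : x \in [set y | in_coset V x y] by rewrite inE /in_coset subrr sub0mx.
  by rewrite hs inE => /eqP.
by move/setP: hs => /(_ y); rewrite !inE => ->; rewrite hx eq_sym.
Qed.
End Gen.

Lemma digits_eq (F : finType) (s s' : 'I_(#|F| ^ 2)) :
  radix s = radix s' -> units s = units s' -> s = s'.
Proof.
move=> h1 h2; apply: val_inj => /=.
by rewrite (divn_eq s #|F|) (divn_eq s' #|F|); rewrite /radix /units in h1 h2; rewrite h1 h2.
Qed.


Section Flag.
Variable F : finFieldType.

Lemma subE (y y' : 'rV[F]_4) j : (y' - y) ord0 j = y' ord0 j - y ord0 j.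
Proof. by rewrite !mxE. Qed.

Lemma Z4_eq (y y' : 'rV[F]_4) :
  Z4 ((y' - y) ord0 c0) ((y' - y) ord0 c1) ((y' - y) ord0 c2) ((y' - y) ord0 c3) -> y' = y.
Proof.
rewrite !subE => -[h0 h1 h2 h3].
by apply: row4_eq; apply/eqP; rewrite -subr_eq0; apply/eqP.
Qed.

Lemma coset_gE (t : F) x y : t != 0 -> in_coset (flag_g (Zmat t)) x y ->
  (y - x) ord0 c2 = t * (y - x) ord0 c0 + (y - x) ord0 c1 /\ (y - x) ord0 c3 = (y - x) ord0 c1 / t.
Proof. by move=> tn; rewrite /in_coset gchar // => /andP [/eqP -> /eqP ->]. Qed.

Lemma wit_coset (t : F) x al be : in_coset (flag_g (Zmat t)) x (x + mk2 al be *m flag_g (Zmat t)).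
Proof. by rewrite /in_coset (addrC x) addrK; apply/submxP; exists (mk2 al be). Qed.

Lemma witE (t : F) x al be :
  let z := x + mk2 al be *m flag_g (Zmat t) in
  [/\ z ord0 c0 = x ord0 c0 + al, z ord0 c1 = x ord0 c1 + be,
      z ord0 c2 = x ord0 c2 + (t * al + be) & z ord0 c3 = x ord0 c3 + be * t^-1].
Proof. by rewrite /= mulg !mxE. Qed.

Lemma flag_ok (t : F) : t != 0 -> sudoku_flag (flag_g (Zmat t)) (flag_V (Zmat t)).
Proof.
move=> tn; split; [exact: rank_g | exact: rank_V | exact: g_le_V | ].
move=> x a b; split.
- have [h0 h1 h2 h3] := witE t x (a - x ord0 c0) (b - x ord0 c1).
  apply: (@card_one _ _ (x + mk2 (a - x ord0 c0) (b - x ord0 c1) *m flag_g (Zmat t))).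
    rewrite inE wit_coset h0 h1 /=; apply/andP; split; apply/eqP; ring.
  move=> z; rewrite !inE => /andP [hz /andP [/eqP z0 /eqP z1]].
  apply: Z4_eq; have [e2 e3] := @coset_gE t (x + mk2 (a - x ord0 c0) (b - x ord0 c1) *m flag_g (Zmat t)) z tn (coset_diff (wit_coset _ _ _ _) hz).
  apply: (@fAfP _ _ _ _ _ t tn) => //; rewrite subE ?z0 ?z1 ?h0 ?h1; ring.
- pose be := (b - x ord0 c3) * t; pose al := (a - x ord0 c2 - be) / t.
  have [h0 h1 h2 h3] := witE t x al be.
  apply: (@card_one _ _ (x + mk2 al be *m flag_g (Zmat t))).
    rewrite inE wit_coset h2 h3 /= /al /be; apply/andP; split; apply/eqP; fld.
  move=> z; rewrite !inE => /andP [hz /andP [/eqP z0 /eqP z1]].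
  apply: Z4_eq; have [e2 e3] := @coset_gE t (x + mk2 al be *m flag_g (Zmat t)) z tn (coset_diff (wit_coset _ _ _ _) hz).
  apply: (@fBfP _ _ _ _ _ t tn) => //; rewrite subE ?z0 ?z1 ?h2 ?h3 /al /be; fld.
- pose al := a - x ord0 c0; pose be := b - x ord0 c2 - t * al.
  have [h0 h1 h2 h3] := witE t x al be.
  apply: (@card_one _ _ (x + mk2 al be *m flag_g (Zmat t))).
    rewrite inE wit_coset h0 h2 /= /be /al; apply/andP; split; apply/eqP; ring.
  move=> z; rewrite !inE => /andP [hz /andP [/eqP z0 /eqP z1]].
  apply: Z4_eq; have [e2 e3] := @coset_gE t (x + mk2 al be *m flag_g (Zmat t)) z tn (coset_diff (wit_coset _ _ _ _) hz).
  apply: (@fP_A_B _ _ _ _ _ t tn) => //; rewrite subE ?z0 ?z1 ?h0 ?h2 /be /al; ring.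
Qed.
End Flag.

Section Main.
Variable F : finFieldType.
Variable S : {set F}.
Variable e : F -> 'I_#|F|.
Variable M : F -> 'rV[F]_4 -> 'I_(#|F| ^ 2).
Hypothesis he : bijective e.
Hypothesis h0 : 0 \notin S.
Hypothesis hS : forall i j, i \in S -> j \in S -> i != j -> (i + j != 0) && (i * j != -1).
Hypothesis hgen : forall i, i \in S -> generated_by (flag_g (Zmat i)) (flag_V (Zmat i)) (M i).

Lemma nzS i : i \in S -> i != 0.
Proof. by move=> iS; apply: contraNneq h0 => <-. Qed.

Lemma Mg i x y : i \in S -> M i x = M i y -> (y - x <= flag_g (Zmat i))%MS.
Proof. by move=> iS E; have := gen_g (hgen iS) x y; rewrite E eqxx. Qed.

Lemma MV i x y : i \in S -> radix (M i x) = radix (M i y) -> (y - x <= flag_V (Zmat i))%MS.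
Proof. by move=> iS E; have := gen_V (hgen iS) x y; rewrite E eqxx. Qed.

Lemma Minj : {in S &, injective M}.
Proof.
move=> i j iS jS E; case: (eqVneq i j) => // nij; exfalso.
have : M i 0 = M i (mk2 1 0 *m flag_g (Zmat i)).
  by apply/eqP; rewrite (gen_g (hgen iS)) /in_coset subr0; apply/submxP; exists (mk2 1 0).
rewrite E => /(Mg jS); rewrite subr0 mulg gchar ?nzS // mk4E0 mk4E1 mk4E2.
by case/andP; rewrite !mulr1 !addr0 (negbTE nij).
Qed.

Definition good := fun t : F => t \in S.
Lemma hG0 t : good t -> t != 0. Proof. exact: nzS. Qed.
Lemma hG t u : good t -> good u -> t != u -> (t + u != 0) && (t * u != -1).
Proof. exact: hS. Qed.

Let w := fun k : 'I_#|S| => enum_val k.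
Lemma hw : injective w. Proof. exact: enum_val_inj. Qed.
Lemma hwg k : good (w k). Proof. exact: enum_valP. Qed.

Lemma gz1 t x y : t \in S -> M t x = M t y ->
  let d := y - x in z1b (d ord0 c0) (d ord0 c1) (d ord0 c2) (d ord0 c3) (KP t).
Proof. by move=> tS /(Mg tS); rewrite gchar ?nzS. Qed.

Lemma ortho k l : k != l -> Defs.orthogonal (M (w k)) (M (w l)).
Proof.
move=> nkl s t.
pose h := fun y => (M (w k) y, M (w l) y).
have hinj : injective h.
  move=> y y' [Ek El]; symmetry; apply: Z4_eq.
  apply: (@P2k _ good hG0 _ _ _ _ (KP (w k)) (KP (w l))); rewrite /= ?hwg //.
  - by case=> /hw E; rewrite E eqxx in nkl.
  - by case/andP: (gz1 (hwg k) Ek) => /eqP -> /eqP ->.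
  - by case/andP: (gz1 (hwg l) El) => /eqP -> /eqP ->.
have hc : (#|{: 'I_(#|F| ^ 2) * 'I_(#|F| ^ 2)}| <= #|{: 'rV[F]_4}|)%N.
  by rewrite card_prod !card_ord card_mx -expnD.
apply: etrans (bij_card1 hinj hc (s, t)).
by apply: eq_card => y; rewrite !inE /h.
Qed.


Let Mk := fun k : 'I_#|S| => M (w k).

Lemma q0 : (0 < #|F|)%N.
Proof. by apply/card_gt0P; exists 0. Qed.

Lemma bnd i j c : (assoc_array e Mk i j c < #|F|)%N.
Proof.
rewrite /assoc_array; case: (split i) => [a|k].
  by case: ifP => _; case: ifP => _.
case: ifP => _; last by rewrite /units ltn_pmod // q0.
by rewrite /radix ltn_divLR ?q0 // mulnn.
Qed.

Lemma e_inj (a b : F) : e a = e b -> a = b. Proof. exact: (@bij_inj _ _ e he). Qed.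

Lemma row0 x y i : assoc_array e Mk i ord0 x = assoc_array e Mk i ord0 y ->
  let d := y - x in z0b (d ord0 c0) (d ord0 c1) (d ord0 c2) (d ord0 c3) (kind_of w i).
Proof.
rewrite /assoc_array /kind_of; case: (split i) => [a|k] /=.
  by case: ifP => _ /= E0; have E := e_inj (val_inj E0); rewrite subE E subrr.
by move=> /(MV (hwg k)) /(Vchar (nzS (hwg k))) P; apply/eqP; exact: P.
Qed.

Lemma row1 x y i : assoc_array e Mk i ord0 x = assoc_array e Mk i ord0 y ->
  assoc_array e Mk i ord_max x = assoc_array e Mk i ord_max y ->
  let d := y - x in z1b (d ord0 c0) (d ord0 c1) (d ord0 c2) (d ord0 c3) (kind_of w i).
Proof.
rewrite /assoc_array /kind_of; case: (split i) => [a|k] /=.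
  by case: ifP => _ /= E0 E1; have E := e_inj (val_inj E0); have E' := e_inj (val_inj E1); rewrite !subE E E' !subrr eqxx.
move=> E E'; have := digits_eq E E'.
by move=> /(gz1 (hwg k)).
Qed.

Lemma ooa : OOA4 #|F| (assoc_array e Mk).
Proof.
split.
- by rewrite card_mx mul1n.
- exact: bnd.
move=> T hT top f.
pose Tsub := {r : 'I_(2 + #|S|) * 'I_2 | r \in T}.
pose h := fun c : 'rV[F]_4 => [ffun r : Tsub => Ordinal (bnd (val r).1 (val r).2 c)].
have hinj : injective h.
  move=> x y E.
  have ag : forall r, r \in T -> assoc_array e Mk r.1 r.2 x = assoc_array e Mk r.1 r.2 y.
    by move=> r rT; have := congr1 (fun g : {ffun Tsub -> 'I_#|F|} => val (g (exist _ r rT : Tsub))) E; rewrite !ffunE.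
  apply: esym; apply: Z4_eq.
  set a0 := (y - x) ord0 c0; set a1 := (y - x) ord0 c1.
  set a2 := (y - x) ord0 c2; set a3 := (y - x) ord0 c3.
  case: (boolP [&& a0 == 0, a1 == 0, a2 == 0 & a3 == 0]) => [/and4P [/eqP ? /eqP ? /eqP ? /eqP ?] | nz].
    by split.
  exfalso.
  have nZ : ~ Z4 a0 a1 a2 a3 by case=> h1 h2 h3 h4; rewrite h1 h2 h3 h4 !eqxx in nz.
  have LB := level_bound hG0 hG hw hwg nZ.
  have sub : T \subset setX [set i | z0b a0 a1 a2 a3 (kind_of w i)] [set ord0]
                   :|: setX [set i | z1b a0 a1 a2 a3 (kind_of w i)] [set ord_max].
    apply/subsetP => -[i j] rT; rewrite !inE /=.
    have : j = ord0 \/ j = ord_max.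
      by case: j rT => -[|[|j]] hj rT; [left|right|]; try apply: val_inj.
    case=> Ej; subst j.
      by apply/orP; left; rewrite eqxx andbT; exact: (row0 (ag _ rT)).
    by apply/orP; right; rewrite eqxx andbT; exact: (row1 (ag _ (top _ rT)) (ag _ rT)).
  have := subset_leq_card sub; rewrite hT cardsU !cardsX !cards1 !muln1 => H.
  by have := leq_trans (leq_trans H (leq_subr _ _)) LB.
have hc : (#|{: {ffun Tsub -> 'I_#|F|}}| <= #|{: 'rV[F]_4}|)%N.
  rewrite card_ffun card_ord card_sig card_mx mul1n.
  have -> : #|[pred x | x \in T]| = #|T| by apply: eq_card.
  by rewrite hT.
apply: etrans (bij_card1 hinj hc [ffun r : Tsub => f (val r).1 (val r).2]).
apply: eq_card => c; rewrite !inE.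
apply/forallP/eqP.
  move=> H; apply/ffunP => r; rewrite !ffunE; apply: val_inj => /=.
  by have := H (val r); rewrite (valP r) /= => /eqP.
move=> E r; apply/implyP => rT.
have := congr1 (fun g : {ffun Tsub -> 'I_#|F|} => val (g (exist _ r rT : Tsub))) E; rewrite !ffunE /= => ->.
by [].
Qed.

End Main.

Unset Implicit Arguments.

Theorem theorem5p4 (F : finFieldType) (S : {set F}) (e : F -> 'I_#|F|)
  (M : F -> 'rV[F]_4 -> 'I_(#|F| ^ 2)) :
  bijective e ->
  0 \notin S ->
  (forall i j, i \in S -> j \in S -> i != j -> (i + j != 0) && (i * j != -1)) ->
  (forall i, i \in S -> generated_by (flag_g (Zmat i)) (flag_V (Zmat i)) (M i)) ->
  (forall i, i \in S -> sudoku_flag (flag_g (Zmat i)) (flag_V (Zmat i))) /\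
  {in S &, injective M} /\
  strongly_orthogonal e (fun k : 'I_#|S| => M (enum_val k)).
Proof.
move=> he h0 hS hgen.
split; first by move=> i iS; apply: flag_ok; apply: contraNneq h0 => <-.
split; first exact: (Minj h0 hgen).
split.
- by move=> k; case: (hgen _ (enum_valP k)).
- by move=> k l nkl; apply: (ortho h0 hgen nkl).
- by apply: ooa.
Qed.
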